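(* For every constant $c>0$ there is a constant $C>0$ such that for all integers $d,k,t$ with $1\le k\le c\sqrt{d}$, $2k\le d$, and $0\le t\le k-1$, \[ \|\mathcal{D}_t\|_1\le C\binom{d-k}{k-t}\binom{d}{t}2^{k-t}, \] where $\mathcal{D}_t$ is the $\binom{[d]}{k}\times\binom{[d]}{k}$ matrix with $\mathcal{D}_t(A,B)=1$ if $|A\cap B|=t$ and $0$ otherwise.
   Context: $\binom{[d]}{k}$ denotes the set of $k$-element subsets of $[d]=\{1,\dots,d\}$; $\mathcal{D}_t$ is the adjacency matrix of the generalized Johnson graph. $\|\cdot\|_1$ is the trace norm (sum of absolute values of eigenvalues for this symmetric matrix). *)

(* Defs.v *)
From HB Require Import structures.
From mathcomp Require Import all_boot all_order all_algebra all_field.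
Set Implicit Arguments. Unset Strict Implicit. Unset Printing Implicit Defensive.
Import Order.TTheory GRing.Theory Num.Theory.
Local Open Scope ring_scope.

Definition kset (d k : nat) : {set {set 'I_d}} := [set A : {set 'I_d} | #|A| == k].

Definition Dt (d k t : nat) : 'M[algC]_#|kset d k| :=
  \matrix_(i, j) ((#|(enum_val i : {set 'I_d}) :&: enum_val j| == t)%:R).

Definition root_seq (p : {poly algC}) : seq algC := sval (closed_field_poly_normal p).

Definition eigvals n (M : 'M[algC]_n) : seq algC := root_seq (char_poly M).

(* Trace norm of a symmetric matrix: sum of absolute values of eigenvalues. *)
Definition trace_norm n (M : 'M[algC]_n) : algC := \sum_(z <- eigvals M) `|z|.

(* Main.v *)
Require Import Defs.
From HB Require Import structures.
From mathcomp Require Import all_boot all_order all_algebra all_field.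
From mathcomp Require Import sesquilinear spectral.
From mathcomp Require Import ring lra zify.
Import Order.TTheory GRing.Theory Num.Theory.
Local Open Scope ring_scope.
Section Sp.
Local Open Scope sesquilinear_scope.

Lemma char_poly_conj n (P B : 'M[algC]_n) : P \is unitarymx ->
  char_poly (P^t* *m B *m P) = char_poly B.
Proof.
move=> Pu.
have PtP : P^t* *m P = 1%:M.
  by rewrite -invmx_unitary // mulVmx // unitarymx_unit.
have PPt : P *m P^t* = 1%:M by apply/unitarymxP.
rewrite /char_poly /char_poly_mx.
set f := (@polyC algC).
set Q := map_mx f (P^t*). set R := map_mx f P.
have QR : R *m Q = 1%:M by rewrite /Q /R -map_mxM PPt map_mx1.
have QR2 : Q *m R = 1%:M by rewrite /Q /R -map_mxM PtP map_mx1.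
have -> : 'X%:M - map_mx f (P^t* *m B *m P) = Q *m ('X%:M - map_mx f B) *m R.
  rewrite !map_mxM mulmxBr mulmxBl mul_mx_scalar -scalemxAl QR2 scalemx1.
  by [].
rewrite !det_mulmx mulrC mulrA -det_mulmx QR det1 mul1r //.
Qed.
End Sp.
Section Sp2.
Local Open Scope sesquilinear_scope.

Lemma unit_facts {n} {P : 'M[algC]_n} : P \is unitarymx ->
  P^t* *m P = 1%:M /\ P *m P^t* = 1%:M.
Proof.
move=> Pu; split; last by apply/unitarymxP.
by rewrite -invmx_unitary // mulVmx // unitarymx_unit.
Qed.

Lemma trace_norm_diag n (A : 'M[algC]_n) : A \is normalmx ->
  trace_norm A = \sum_i `|spectral_diag A 0 i|.
Proof.
move=> An.
set P := spectralmx A; set D := spectral_diag A.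
have Pu : P \is unitarymx by apply: spectral_unitarymx.
have hA : A = P^t* *m diag_mx D *m P.
  by rewrite -invmx_unitary //; apply/orthomx_spectralP.
have cp : char_poly A = \prod_(i < n) ('X - (D 0 i)%:P).
  rewrite hA char_poly_conj // char_poly_trig ?diag_mx_is_trig //.
  by apply: eq_bigr => i _; rewrite mxE eqxx mulr1n.
have pe : perm_eq (eigvals A) [seq D 0 i | i <- enum 'I_n].
  apply: prod_XsubC_eq; rewrite big_map big_enum /=.
  rewrite -cp /eigvals /root_seq.
  case: closed_field_poly_normal => r /= hr.
  by rewrite [in RHS]hr (monicP (char_poly_monic A)) scale1r.
by rewrite /trace_norm (perm_big _ pe) big_map big_enum.
Qed.
End Sp2.
Section Sp3.
Local Open Scope sesquilinear_scope.

Lemma trace_norm_bound n (A : 'M[algC]_n) (I : finType) (w : I -> algC)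
    (v : I -> 'rV[algC]_n) :
  A \is normalmx -> A = \sum_r w r *: ((v r)^t* *m v r) ->
  trace_norm A <= \sum_r `|w r| * (v r *m (v r)^t*) 0 0.
Proof.
move=> An Adef.
rewrite trace_norm_diag //.
set P := spectralmx A; set D := spectral_diag A.
have Pu : P \is unitarymx by apply: spectral_unitarymx.
have [PtP PPt] := unit_facts Pu.
have hA : A = P^t* *m diag_mx D *m P.
  by rewrite -invmx_unitary //; apply/orthomx_spectralP.
pose e i := if D 0 i == 0 then 0 else `|D 0 i| / D 0 i.
have e1 i : `|e i| <= 1.
  rewrite /e; case: eqP => [_|/eqP Dn0]; first by rewrite normr0 ler01.
  by rewrite normrM normfV normr_id divff ?normr_eq0.
have eD i : `|D 0 i| = e i * D 0 i.
  rewrite /e; case: eqP => [->|/eqP Dn0]; first by rewrite normr0 mul0r.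
  by rewrite mulfVK.
set S := \sum_i `|D 0 i|.
have S0 : 0 <= S by apply: sumr_ge0 => i _; exact: normr_ge0.
have SE : S = \tr (diag_mx (\row_i e i) *m (P *m A *m P^t*)).
  have -> : P *m A *m P^t* = diag_mx D.
    by rewrite hA !mulmxA PPt mul1mx -mulmxA PPt mulmx1.
  rewrite mulmx_diag mxtrace_diag /S; apply: eq_bigr => i _.
  by rewrite !mxE eD.
have term r : \tr (diag_mx (\row_i e i) *m (P *m ((v r)^t* *m v r) *m P^t*))
   = ((v r *m P^t*) *m diag_mx (\row_i e i) *m (v r *m P^t*)^t*) 0 0.
  rewrite trmx_mul map_mxM trmxCK -trace_mx11.
  rewrite (mxtrace_mulC (v r *m P^t* *m diag_mx (\row_i e i))).
  by rewrite !mulmxA [RHS]mxtrace_mulC !mulmxA.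
have bterm r : `|((v r *m P^t*) *m diag_mx (\row_i e i) *m (v r *m P^t*)^t*) 0 0|
   <= (v r *m (v r)^t*) 0 0.
  set u := v r *m P^t*.
  have -> : (v r *m (v r)^t*) = u *m u^t*.
    by rewrite /u trmx_mul map_mxM trmxCK mulmxA -(mulmxA (v r)) PtP mulmx1.
  clearbody u.
  rewrite mul_mx_diag !mxE.
  apply: le_trans (ler_norm_sum _ _ _) _.
  apply: ler_sum => i _; rewrite !mxE normrM normrM.
  rewrite norm_conjC mulrAC -expr2 normCK; apply: ler_piMr => //.
  by rewrite -normCK exprn_ge0.
rewrite -(ger0_norm S0) SE Adef mulmx_sumr mulmx_suml mulmx_sumr raddf_sum.
apply: le_trans (ler_norm_sum _ _ _) _.
apply: ler_sum => r _.
rewrite /= -scalemxAr -scalemxAl -scalemxAr mxtraceZ term normrM.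
by apply: ler_wpM2l => //; exact: normr_ge0.
Qed.
End Sp3.
Lemma sum_subsets (T : finType) (X : {set T}) (f : nat -> algC) :
  \sum_(Y : {set T} | Y \subset X) f #|Y| = \sum_(s < #|X|.+1) 'C(#|X|, s)%:R * f s.
Proof.
rewrite (partition_big (fun Y : {set T} => (inord #|Y| : 'I_(#|X|.+1))) xpredT) //=.
apply: eq_bigr => s _.
have hY (Y : {set T}) : Y \subset X -> (inord #|Y| == s :> 'I_(#|X|.+1)) = (#|Y| == s).
  by move=> sYX; rewrite -val_eqE /= inordK // ltnS subset_leq_card.
rewrite (eq_bigr (fun _ => f s)); last first.
  by move=> Y /andP[sYX]; rewrite hY // => /eqP ->.
rewrite sumr_const -cards_draws mulr_natl; congr (_ *+ _).
apply: eq_card => Y; rewrite !inE unfold_in /=.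
by case sYX: (Y \subset X) => //=; rewrite hY.
Qed.
Lemma bin_mul m s t : (t <= s)%N -> (s <= m)%N ->
  ('C(m, s) * 'C(s, t) = 'C(m, t) * 'C(m - t, s - t))%N.
Proof.
move=> ts sm.
have pos : (0 < t`! * (s - t)`! * (m - s)`!)%N by rewrite !muln_gt0 !fact_gt0.
apply/eqP; rewrite -(eqn_pmul2r pos); apply/eqP.
have ms : (m - t - (s - t) = m - s)%N by lia.
have H1 := bin_fact sm. have H2 := bin_fact ts.
have H3 : (s - t <= m - t)%N by lia.
have H4 := bin_fact H3. rewrite ms in H4.
have H5 : (t <= m)%N by lia.
have H6 := bin_fact H5.
transitivity ('C(m, s) * ('C(s, t) * (t`! * (s - t)`!)) * (m - s)`!)%N; first by ring.
rewrite H2 -mulnA H1.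
transitivity ('C(m, t) * t`! * ('C(m - t, s - t) * ((s - t)`! * (m - s)`!)))%N; last by ring.
by rewrite H4 -H6 mulnA.
Qed.
Lemma binsum (m t : nat) (g : nat -> algC) : (t <= m)%N ->
  \sum_(s < m.+1) 'C(m, s)%:R * ('C(s, t)%:R * g (s - t)%N)
  = 'C(m, t)%:R * \sum_(j < (m - t).+1) 'C(m - t, j)%:R * g j.
Proof.
move=> tm.
rewrite -(big_mkord xpredT (fun s => 'C(m, s)%:R * ('C(s, t)%:R * g (s - t)%N))).
rewrite (@big_cat_nat _ _ _ t) /=; [|by []|by rewrite ltnW // ltnS].
rewrite big_nat big1 ?add0r; last first.
  by move=> s /andP[_ st]; rewrite (bin_small st) mul0r mulr0.
rewrite -{1}(add0n t) big_addn subSn // big_mkord mulr_sumr.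
apply: eq_bigr => j _.
rewrite addnK mulrA -natrM bin_mul ?leq_addl //; last first.
  by have := ltn_ord j; lia.
by rewrite natrM addnK -mulrA.
Qed.
Lemma alt_sum n : \sum_(j < n.+1) 'C(n, j)%:R * (-1 : algC) ^+ j = (n == 0%N)%:R.
Proof.
have := exprDn (1 : algC) (-1) n; rewrite subrr expr0n => ->.
by apply: eq_bigr => j _; rewrite expr1n mul1r mulr_natl.
Qed.

Lemma two_sum n : \sum_(j < n.+1) 'C(n, j)%:R * (1 : algC) = 2 ^+ n.
Proof.
have := exprDn (1 : algC) 1 n => ->.
by apply: eq_bigr => j _; rewrite !expr1n mul1r mulr_natl.
Qed.

Lemma ie (T : finType) (X : {set T}) t :
  \sum_(Y : {set T} | Y \subset X) (-1) ^+ (#|Y| - t) * 'C(#|Y|, t)%:R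
  = (#|X| == t)%:R :> algC.
Proof.
rewrite (sum_subsets _ X (fun s => (-1) ^+ (s - t) * 'C(s, t)%:R)).
case: (leqP t #|X|) => tX.
  transitivity (\sum_(s < #|X|.+1) 'C(#|X|, s)%:R * ('C(s, t)%:R * (fun j => (-1 : algC) ^+ j) (s - t)%N)).
    by apply: eq_bigr => s _; rewrite [X in _ * X]mulrC.
  rewrite binsum // alt_sum -natrM; congr (_ %:R).
  rewrite subn_eq0; have [->|ne] := eqVneq #|X| t; first by rewrite binn leqnn.
  by rewrite leq_eqVlt (negbTE ne) /= ltnNge tX /= muln0.
rewrite big1; first by rewrite (ltn_eqF tX).
move=> s _; have st : (s < t)%N by have := ltn_ord s; lia.
by rewrite (bin_small st) mulr0 mulr0.
Qed.

Lemma pow_sum (T : finType) (X : {set T}) t : (t <= #|X|)%N ->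
  \sum_(Y : {set T} | Y \subset X) 'C(#|Y|, t)%:R
  = ('C(#|X|, t) * 2 ^ (#|X| - t))%:R :> algC.
Proof.
move=> tX.
rewrite (sum_subsets _ X (fun s => 'C(s, t)%:R)).
transitivity (\sum_(s < #|X|.+1) 'C(#|X|, s)%:R * ('C(s, t)%:R * (fun _ => (1:algC)) (s - t)%N)).
  by apply: eq_bigr => s _; rewrite mulr1.
by rewrite (binsum _ _ (fun _ => 1)) // two_sum natrM natrX.
Qed.
Section D5.
Local Open Scope sesquilinear_scope.

Lemma Dt_herm d k t : (Dt d k t)^t* = Dt d k t.
Proof.
by apply/matrixP => i j; rewrite !mxE conjC_nat setIC.
Qed.

Lemma Dt_normal d k t : Dt d k t \is normalmx.
Proof. by apply/normalmxP; rewrite Dt_herm. Qed.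

Lemma Dt_decomp d k t :
  Dt d k t = \sum_(T : {set 'I_d})
     ((-1) ^+ (#|T| - t) * 'C(#|T|, t)%:R) *:
     ((\row_(i < #|kset d k|) (T \subset (enum_val i : {set 'I_d}))%:R)^t* *m
      (\row_(i < #|kset d k|) (T \subset (enum_val i : {set 'I_d}))%:R)).
Proof.
apply/matrixP => i j; rewrite summxE !mxE -ie big_mkcond /=.
apply: eq_bigr => T _; rewrite !mxE big_ord1 !mxE conjC_nat -natrM mulnb -subsetI.
by case: ifP => _; rewrite ?mulr1 ?mulr0.
Qed.

Lemma tn_Dt d k t : (t <= k)%N ->
  trace_norm (Dt d k t) <= ('C(d, k) * 'C(k, t) * 2 ^ (k - t))%:R.
Proof.
move=> tk.
apply: le_trans (trace_norm_bound _ _ _ _ _ (Dt_normal d k t) (Dt_decomp d k t)) _.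
rewrite le_eqVlt; apply/orP; left; apply/eqP.
under eq_bigr => T _.
  rewrite normrM normrX normrN1 expr1n mul1r normr_nat !mxE.
  under eq_bigr => i _ do rewrite !mxE conjC_nat -natrM mulnb andbb.
  rewrite mulr_sumr.
  over.
rewrite exchange_big /=.
transitivity (\sum_(i < #|kset d k|) ('C(k, t) * 2 ^ (k - t))%:R : algC).
  apply: eq_bigr => i _.
  have ck : #|(enum_val i : {set 'I_d})| = k.
    by have := enum_valP i; rewrite inE => /eqP.
  have := pow_sum _ (enum_val i : {set 'I_d}) t; rewrite ck => /(_ tk) <-.
  rewrite [RHS]big_mkcond /=.
  by apply: eq_bigr => T _; case: ifP; rewrite ?mulr1 ?mulr0.
rewrite sumr_const card_ord /kset card_draws card_ord -mulr_natr !natrM.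
ring.
Qed.
End D5.
Lemma expn_mono m n e : (m <= n)%N -> (m ^ e <= n ^ e)%N.
Proof. by move=> mn; case: e => [//|e]; rewrite leq_exp2r. Qed.

Lemma binL1 n p j : (j <= p)%N -> (p <= n)%N ->
  ('C(n, p - j) * (n - p + 1) ^ j <= 'C(n, p) * p ^ j)%N.
Proof.
move=> + pn; elim: j => [|j IH] jp; first by rewrite !subn0 !expn0.
have jp' : (j <= p)%N by lia.
have := IH jp'.
have e : ((p - j) * 'C(n, p - j) = (n - (p - j.+1)) * 'C(n, p - j.+1))%N.
  have := mul_bin_left n (p - j.+1).
  by have -> : ((p - j.+1).+1 = p - j)%N by lia.
have h1 : (n - p + 1 <= n - (p - j.+1))%N by lia.
have h2 : (p - j <= p)%N by lia.
move=> H.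
rewrite expnS mulnA.
apply: (@leq_trans ('C(n, p - j.+1) * (n - (p - j.+1)) * (n - p + 1) ^ j)).
  by rewrite leq_mul2r leq_mul2l h1 !orbT.
rewrite (mulnC 'C(n, _)) -e expnS.
apply: (@leq_trans (p * ('C(n, p - j) * (n - p + 1) ^ j))).
  by rewrite mulnA leq_mul2r leq_mul2r h2 !orbT.
by rewrite [X in (_ <= X)%N]mulnCA leq_mul2l H orbT.
Qed.

Lemma binL2 p j : ('C(p, j) * j`! <= p ^ j)%N.
Proof.
rewrite bin_ffact; elim: j => [//|j IH].
by rewrite ffactnSr expnSr leq_mul // leq_subr.
Qed.

Lemma binL3 y j : (y ^ j <= y ^ y * j`!)%N.
Proof.
elim: j => [|j IH]; first by rewrite expn0 fact0 muln1 expn_gt0; case: y.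
case: (leqP y j) => yj.
  rewrite expnS factS.
  apply: (@leq_trans (y * (y ^ y * j`!))); first by rewrite leq_mul2l IH orbT.
  by rewrite mulnCA leq_mul2l leq_mul2r ltnW ?orbT.
case: y yj IH => [//|y] yj _.
apply: (@leq_trans (y.+1 ^ y.+1)%N); first by apply: leq_pexp2l.
by rewrite -{1}(muln1 (y.+1 ^ y.+1)%N) leq_mul2l fact_gt0 orbT.
Qed.

Lemma bin_le_exp n m : ('C(n, m) <= 2 ^ n)%N.
Proof.
elim: n m => [|n IH] [|m] //=; first by rewrite bin0 expn_gt0.
by rewrite binS expnS mul2n -addnn leq_add.
Qed.

Lemma geo m : (\sum_(j < m) 2 ^ j < 2 ^ m)%N.
Proof.
elim: m => [|m IH]; first by rewrite big_ord0.
by rewrite big_ord_recr /= expnS mul2n -addnn ltn_add2r.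
Qed.
Lemma term_bound K n p k j : (j <= p)%N -> (p <= k)%N -> (3 * k <= n)%N ->
  (k * k <= K * (n + k))%N ->
  ('C(p, j) * 'C(n, p - j) * 2 ^ j <= (4 * K) ^ (4 * K) * 'C(n, p))%N.
Proof.
move=> jp pk kn kK.
set q := (n - p + 1)%N.
have q0 : (0 < q ^ j)%N by rewrite expn_gt0 /q addn1.
have pn : (p <= n)%N by lia.
have A : ('C(p, j) * 'C(n, p - j) * j`! * q ^ j <= 'C(n, p) * (2 * K) ^ j * q ^ j)%N.
  apply: (@leq_trans (p ^ j * ('C(n, p) * p ^ j))).
    have -> : ('C(p, j) * 'C(n, p - j) * j`! * q ^ j = ('C(p, j) * j`!) * ('C(n, p - j) * q ^ j))%N by ring.
    by apply: leq_mul; [exact: binL2 | exact: binL1].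
  have -> : (p ^ j * ('C(n, p) * p ^ j) = 'C(n, p) * (p * p) ^ j)%N by rewrite expnMn; ring.
  rewrite -mulnA -expnMn leq_mul2l; apply/orP; right.
  apply: expn_mono.
  have : (K * (n + k) <= 2 * K * q)%N by rewrite /q; nia.
  by nia.
have B : ('C(p, j) * 'C(n, p - j) * j`! <= 'C(n, p) * (2 * K) ^ j)%N.
  by rewrite -(leq_pmul2r q0).
have C : ('C(p, j) * 'C(n, p - j) * 2 ^ j * j`! <= (4 * K) ^ (4 * K) * 'C(n, p) * j`!)%N.
  apply: (@leq_trans ('C(n, p) * (4 * K) ^ j)).
    have -> : ((4 * K) ^ j = (2 * K) ^ j * 2 ^ j)%N.
      by rewrite -expnMn; congr (_ ^ _)%N; ring.
    have -> : ('C(p, j) * 'C(n, p - j) * 2 ^ j * j`! = 2 ^ j * ('C(p, j) * 'C(n, p - j) * j`!))%N by ring.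
    have -> : ('C(n, p) * ((2 * K) ^ j * 2 ^ j) = 2 ^ j * ('C(n, p) * (2 * K) ^ j))%N by ring.
    by rewrite leq_mul2l B orbT.
  have := binL3 (4 * K) j.
  have -> : ((4 * K) ^ (4 * K) * 'C(n, p) * j`! = 'C(n, p) * ((4 * K) ^ (4 * K) * j`!))%N by ring.
  by move=> h; rewrite leq_mul2l h orbT.
by rewrite -(leq_pmul2r (fact_gt0 j)).
Qed.
Lemma geo_rev p : (\sum_(j < p.+1) 2 ^ (p - j) < 2 ^ p.+1)%N.
Proof.
rewrite (reindex_inj rev_ord_inj) /=.
apply: leq_trans (geo p.+1); rewrite leq_eqVlt; apply/orP; left; apply/eqP.
congr (_.+1); apply: eq_bigr => j _; rewrite subSS subKn //; exact: (ltn_ord j).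
Qed.

Lemma ratio K n p k : (p <= k)%N -> (k <= n)%N -> (k * k <= K * (n + k))%N ->
  ('C(n + p, p) <= (2 * (4 * K) ^ (4 * K) + 2 ^ (16 * K)) * 'C(n, p))%N.
Proof.
move=> pk kn kK.
have pn : (p <= n)%N by lia.
have Cpos : (0 < 'C(n, p))%N by rewrite bin_gt0.
case: (leqP (3 * k) n) => k3.
  set Y := ((4 * K) ^ (4 * K))%N.
  apply: (@leq_trans (2 * Y * 'C(n, p))); last by rewrite leq_mul2r leq_addr orbT.
  rewrite -(leq_pmul2l (expn_gt0 2 p)).
  rewrite addnC -binomial.Vandermonde big_distrr /=.
  apply: (@leq_trans (\sum_(j < p.+1) Y * 'C(n, p) * 2 ^ (p - j))).
    apply: leq_sum => j _.
    have jp : (j <= p)%N by rewrite -ltnS.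
    have -> : (2 ^ p = 2 ^ j * 2 ^ (p - j))%N by rewrite -expnD subnKC.
    have -> : (2 ^ j * 2 ^ (p - j) * ('C(p, j) * 'C(n, p - j)) = 'C(p, j) * 'C(n, p - j) * 2 ^ j * 2 ^ (p - j))%N by ring.
    by rewrite leq_mul2r (term_bound _ _ _ _ _ jp pk k3 kK) orbT.
  rewrite -big_distrr /=.
  have := geo_rev p; rewrite expnS => g.
  have -> : (2 ^ p * (2 * Y * 'C(n, p)) = Y * 'C(n, p) * (2 * 2 ^ p))%N by ring.
  by rewrite leq_mul2l ltnW ?orbT.
have k4 : (k < 4 * K)%N by nia.
apply: (@leq_trans (2 ^ (16 * K))).
  apply: leq_trans (bin_le_exp _ _) _.
  by apply: leq_pexp2l => //; lia.
apply: (@leq_trans (2 ^ (16 * K) * 'C(n, p))).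
  by rewrite -{1}(muln1 (2 ^ (16 * K))%N) leq_mul2l Cpos orbT.
by rewrite leq_mul2r leq_addl orbT.
Qed.
Theorem fact3 :
  forall c : algC, 0 < c ->
  exists C : algC, 0 < C /\
    forall d k t : nat,
      (1 <= k)%N -> k%:R <= c * sqrtC d%:R -> (2 * k <= d)%N -> (t <= k - 1)%N ->
      trace_norm (Dt d k t) <= C * ('C(d - k, k - t) * 'C(d, t) * 2 ^ (k - t))%:R.
Proof.
move=> c c0.
set K := Num.Def.archi_bound (c ^+ 2).
have cK : c ^+ 2 < K%:R by apply: archi_boundP; rewrite exprn_ge0 // ltW.
set B := (2 * (4 * K) ^ (4 * K) + 2 ^ (16 * K))%N.
exists B%:R; split.
  by rewrite ltr0n /B addn_gt0 expn_gt0 orbT.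
move=> d k t k1 kc dk tk1.
have tk : (t <= k)%N by lia.
have kK : (k * k <= K * d)%N.
  rewrite -(ler_nat algC) !natrM.
  apply: (@le_trans _ _ ((c * sqrtC d%:R) * (c * sqrtC d%:R))).
    by apply: ler_pM => //; exact: ler0n.
  rewrite mulrACA -expr2 -expr2 sqrtCK.
  by apply: ler_wpM2r; [exact: ler0n | exact: ltW].
apply: le_trans (tn_Dt d k t tk) _.
rewrite -natrM ler_nat.
rewrite (bin_mul d k t) //; last by lia.
have h1 : (k <= d - k)%N by lia.
have h2 : (k * k <= K * (d - k + k))%N by have -> : (d - k + k = d)%N by lia.
have R := ratio K (d - k) (k - t) k (leq_subr t k) h1 h2.
have e : (d - k + (k - t) = d - t)%N by lia.
rewrite e in R.
rewrite -/B in R.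
have -> : (B * ('C(d - k, k - t) * 'C(d, t) * 2 ^ (k - t)) = 'C(d, t) * (B * 'C(d - k, k - t)) * 2 ^ (k - t))%N by ring.
by rewrite leq_mul2r leq_mul2l R !orbT.
Qed.
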